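(* Let $m\ge 2$ and let $n_1,\dots,n_m\ge 5$ be odd. Then the strong metric dimension of the odd chain cycle satisfies $$sdim(\mathcal{C}(C_{n_1},\dots,C_{n_m}))=m-1+\left\lfloor\frac{n_1}{2}\right\rfloor+\left\lfloor\frac{n_m}{2}\right\rfloor+\sum_{i=2}^{m-1}\left\lfloor\frac{n_i-2}{2}\right\rfloor.$$
   Context: Let $C_{n_1},\dots,C_{n_m}$ be pairwise disjoint cycles, $V(C_{n_i})=\{v^i_1,\dots,v^i_{n_i}\}$ with $v^i_j$ adjacent to $v^i_{j+1}$ (indices mod $n_i$). The odd chain cycle (all $n_i$ odd) is obtained by identifying $v^i_{(n_i+1)/2+1}$ with $v^{i+1}_1$ for $i=1,\dots,m-1$. A vertex $w$ strongly resolves distinct vertices $u,v$ if $u$ lies on some shortest $v$–$w$ path or $v$ lies on some shortest $u$–$w$ path. A set $W\subseteq V(G)$ is a strong resolving set if every pair of distinct vertices is strongly resolved by some $w\in W$; $sdim(G)$ is the minimum size of a strong resolving set. *)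

(* Defs.v *)
From mathcomp Require Import all_boot.
Set Implicit Arguments. Unset Strict Implicit. Unset Printing Implicit Defensive.

Definition shortest_path (T : finType) (adj : rel T) (u v : T) (p : seq T) : Prop :=
  [/\ path adj u p, last u p = v &
      forall q : seq T, path adj u q -> last u q = v -> size p <= size q].

Definition strongly_resolves (T : finType) (adj : rel T) (w u v : T) : Prop :=
  (exists p, shortest_path adj v w p /\ u \in v :: p) \/
  (exists p, shortest_path adj u w p /\ v \in u :: p).

Definition strong_resolving_set (T : finType) (adj : rel T) (W : {set T}) : Prop :=
  forall u v : T, u != v -> exists2 w, w \in W & strongly_resolves adj w u v.

Definition is_sdim (T : finType) (adj : rel T) (k : nat) : Prop :=
  (exists W : {set T}, strong_resolving_set adj W /\ #|W| = k) /\
  (forall W : {set T}, strong_resolving_set adj W -> k <= #|W|).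

(* Cycles are 0-indexed i = 0..m-1 (paper: 1..m) with lengths n i;
   vertex v^{i+1}_{j+1} of the paper is the raw vertex (i, j), j < n i.
   The paper identifies v^i_{(n_i+1)/2+1} with v^{i+1}_1, i.e. raw
   (i, (n i + 1)/2) with raw (i+1, 0).  The canonical representative of each
   class is the one that is not of the form (i, 0) with i > 0. *)

Definition chainK (m : nat) (n : nat -> nat) : nat := \max_(i < m) n i.

Definition raw_vert (m : nat) (n : nat -> nat) := ('I_m * 'I_(chainK m n))%type.

Definition raw_valid m n (a : raw_vert m n) : bool := a.2 < n a.1.

Definition canonical_vert m n (a : raw_vert m n) : bool :=
  raw_valid a && ~~ ((0 < a.1) && (a.2 == 0 :> nat)).

Definition ident m n (a b : raw_vert m n) : bool :=
  [&& (b.1 == a.1.+1 :> nat), (a.2 == (n a.1).+1./2 :> nat) & (b.2 == 0 :> nat)].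

Definition same_vert m n (a b : raw_vert m n) : bool :=
  [|| a == b, ident a b | ident b a].

Definition raw_adj m n (a b : raw_vert m n) : bool :=
  [&& a.1 == b.1, raw_valid a, raw_valid b &
      (b.2 == (a.2 + 1) %% n a.1 :> nat) || (a.2 == (b.2 + 1) %% n a.1 :> nat)].

Definition chain_vert (m : nat) (n : nat -> nat) :=
  {a : raw_vert m n | canonical_vert a}.

Definition chain_adj m n : rel (chain_vert m n) :=
  fun x y => [exists a : raw_vert m n, exists b : raw_vert m n,
    [&& same_vert (val x) a, same_vert (val y) b & raw_adj a b]].

(* Main.v *)
Require Import Defs.
From mathcomp Require Import all_boot zify.
Set Implicit Arguments. Unset Strict Implicit. Unset Printing Implicit Defensive.

Module C1.

Definition absd (p q : nat) := (p - q) + (q - p).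
Definition cdist (N p q : nat) := minn (absd p q) (N - absd p q).
Definition adjn (N p p' : nat) := (p' == (p + 1) %% N) || (p == (p' + 1) %% N).

Lemma modS1 N p : p < N -> (p + 1) %% N = if p.+1 == N then 0 else p.+1.
Proof.
move=> H. case: eqP => [E|E]; first by rewrite addn1 E modnn.
rewrite modn_small //; lia.
Qed.

Lemma adjnE N p p' : p < N -> p' < N ->
  adjn N p p' = [|| p' == p.+1, p == p'.+1, (p.+1 == N) && (p' == 0) | (p'.+1 == N) && (p == 0)].
Proof.
move=> Hp Hp'. rewrite /adjn !modS1 //.
case: (eqVneq p.+1 N) => E1; case: (eqVneq p'.+1 N) => E2 /=; lia.
Qed.

Lemma cd_sym N p q : cdist N p q = cdist N q p.
Proof. rewrite /cdist /absd. lia. Qed.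

Lemma cd00 N p : cdist N p p = 0.
Proof. rewrite /cdist /absd subnn. exact: min0n. Qed.

Section CD.
Variables (N k : nat).
Hypothesis HN : N = 2 * k + 1.


Lemma cd_le p q : p < N -> q < N -> cdist N p q <= k.
Proof. rewrite /cdist /absd. lia. Qed.

Lemma cd0 p q : p < N -> q < N -> cdist N p q = 0 -> p = q.
Proof. rewrite /cdist /absd. lia. Qed.

Lemma cd_lip p p' q : p < N -> p' < N -> q < N -> adjn N p p' -> cdist N p q <= (cdist N p' q).+1.
Proof. move=> Hp Hp1 Hq Ha. rewrite adjnE // in Ha. rewrite /cdist /absd. lia. Qed.

Lemma cd_step p q : p < N -> q < N -> p != q ->
  exists p', [/\ p' < N, adjn N p p' & (cdist N p' q).+1 = cdist N p q].
Proof.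
move=> Hp Hq Hpq.
case: (ltngtP p q) => Hc; last by rewrite Hc eqxx in Hpq.
- case: (leqP (q - p) k) => Hd.
    exists p.+1; rewrite adjnE //; last lia. split; rewrite /cdist /absd; lia.
  case: p Hp Hpq Hc Hd => [|p] Hp Hpq Hc Hd.
    exists N.-1; rewrite adjnE //; try lia. split; rewrite /cdist /absd; lia.
  exists p; rewrite adjnE //; try lia. split; rewrite /cdist /absd; lia.
- case: (leqP (p - q) k) => Hd.
    case: p Hp Hpq Hc Hd => [|p] Hp Hpq Hc Hd; first lia.
    exists p; rewrite adjnE //; try lia. split; rewrite /cdist /absd; lia.
  case: (ltnP p.+1 N) => HpN.
    exists p.+1; rewrite adjnE //; try lia. split; rewrite /cdist /absd; lia.
  exists 0; rewrite adjnE //; try lia. split; rewrite /cdist /absd; lia.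
Qed.

End CD.

End C1.
Import C1.

Module C2.
Import C1.

Section Chain.
Variables (m : nat) (n : nat -> nat).
Hypothesis Hm : 2 <= m.
Hypothesis Hn : forall i, i < m -> odd (n i) /\ 5 <= n i.

Definition kk i := (n i)./2.

Lemma nE i : i < m -> n i = 2 * kk i + 1 /\ 2 <= kk i.
Proof.
move=> /Hn [Ho H5]. have := odd_double_half (n i). rewrite Ho /kk -muln2. lia.
Qed.

Lemma exitE i : i < m -> (n i).+1./2 = (kk i).+1.
Proof.
move=> /nE [E _]. rewrite E. have -> : (2 * kk i + 1).+1 = (kk i).+1.*2 by lia.
by rewrite doubleK.
Qed.

Definition Sg i j := \sum_(i.+1 <= l < j) kk l.

Lemma Sg_nil i : Sg i i.+1 = 0.
Proof. by rewrite /Sg big_geq. Qed.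

Lemma Sg_cons i j : i.+1 < j -> Sg i j = kk i.+1 + Sg i.+1 j.
Proof. by move=> H; rewrite /Sg big_ltn. Qed.

Lemma Sg_snoc i j : i.+1 <= j -> Sg i j.+1 = Sg i j + kk j.
Proof. by move=> H; rewrite /Sg big_nat_recr. Qed.

Definition ee i := (kk i).+1.

Definition Dn (i p j q : nat) : nat :=
  if i == j then cdist (n i) p q
  else if i < j then cdist (n i) p (ee i) + Sg i j + cdist (n j) 0 q
  else cdist (n j) q (ee j) + Sg j i + cdist (n i) 0 p.

Lemma Dn_sym i p j q : Dn i p j q = Dn j q i p.
Proof. rewrite /Dn eq_sym. case: (ltngtP i j) => H //. by rewrite H cd_sym. Qed.


Lemma Dn_self i p : Dn i p i p = 0.
Proof. by rewrite /Dn eqxx cd00. Qed.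

Lemma cd_exit i : i < m -> cdist (n i) 0 (ee i) = kk i.
Proof. move=> /nE [E _]. rewrite /cdist /absd /ee E. lia. Qed.


Lemma Dn_ident l j q : l.+1 < m -> j < m -> q < n j ->
  Dn l (ee l) j q = Dn l.+1 0 j q.
Proof.
move=> Hl Hj Hq. rewrite /Dn.
case: (ltngtP l j) => H1; case: (ltngtP l.+1 j) => H2; try lia.
- rewrite (@Sg_cons l j) // cd00 (cd_exit Hl). lia.
- subst j. rewrite cd00 Sg_nil. lia.
- rewrite cd00 Sg_snoc; last lia. rewrite [cdist (n l) 0 (ee l)]cd_exit; lia.
- subst j. rewrite cd00 Sg_nil [cdist _ q _]cd_sym. lia.
Qed.

Lemma ee_lt i : i < m -> ee i < n i.
Proof. move=> /nE [E H]. rewrite /ee E. lia. Qed.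

Lemma n_pos i : i < m -> 0 < n i.
Proof. move=> /nE [E _]. by rewrite E addn1. Qed.

Lemma Dn_lip l p p' j q : l < m -> p < n l -> p' < n l -> adjn (n l) p p' ->
  j < m -> q < n j -> Dn l p j q <= (Dn l p' j q).+1.
Proof.
move=> Hl Hp Hp' Ha Hj Hq. have [E _] := nE Hl. have He := ee_lt Hl.
rewrite /Dn. case: (ltngtP l j) => H.
- have := cd_lip E Hp Hp' He Ha. lia.
- rewrite (cd_sym _ 0 p) (cd_sym _ 0 p'). have := cd_lip E Hp Hp' (n_pos Hl) Ha.
  rewrite E; lia.
- subst j. exact (cd_lip E Hp Hp' Hq Ha).
Qed.

Definition cann i p := [&& i < m, p < n i & ~~ ((0 < i) && (p == 0))].

Lemma Dn_zero i p j q : cann i p -> cann j q -> Dn i p j q = 0 -> i = j /\ p = q.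
Proof.
case/and3P => Hi Hp Hc1 /and3P [Hj Hq Hc2]. rewrite /Dn.
case: (ltngtP i j) => H.
- move=> E. have E2 : cdist (n j) 0 q = 0 by lia.
  have [Ej _] := nE Hj. have := cd0 Ej (n_pos Hj) Hq E2. move=> Eq; subst q.
  move: Hc2. rewrite eqxx andbT. lia.
- move=> E. have E2 : cdist (n i) 0 p = 0 by lia.
  have [Ei _] := nE Hi. have := cd0 Ei (n_pos Hi) Hp E2. move=> Eq; subst p.
  move: Hc1. rewrite eqxx andbT. lia.
- subst j. move=> E. have [Ei _] := nE Hi. split => //. exact (cd0 Ei Hp Hq E).
Qed.

Lemma Dn_step i p j q : cann i p -> j < m -> q < n j -> 0 < Dn i p j q ->
  (exists p', [/\ p' < n i, adjn (n i) p p' & (Dn i p' j q).+1 = Dn i p j q]) \/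
  (i.+1 < m /\ p = ee i /\ exists p', [/\ p' < n i.+1, adjn (n i.+1) 0 p' & (Dn i.+1 p' j q).+1 = Dn i p j q]).
Proof.
case/and3P => Hi Hp Hc Hj Hq. have [Ei _] := nE Hi. have Hei := ee_lt Hi.
rewrite /Dn. case: (ltngtP i j) => H Hpos.
- case: (eqVneq p (ee i)) => Hpe; last first.
    left. have [p' [Hp' Ha Hd]] := cd_step Ei Hp Hei Hpe. exists p'. split => //. lia.
  right. have Hi1 : i.+1 < m by lia. split => //. split => //.
  have [Ei1 Hk1] := nE Hi1. subst p. rewrite cd00 add0n in Hpos *.
  case: (ltngtP i.+1 j) => H2; last first.
  + subst j. rewrite Sg_nil /= in Hpos *.
    have Hq0 : 0 != q. apply/eqP => E0; subst q. by rewrite cd00 in Hpos.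
    have [p' [Hp' Ha Hd]] := cd_step Ei1 (n_pos Hi1) Hq Hq0.
    exists p'. split => //.
  + lia.
  + rewrite Sg_cons // in Hpos *.
    have [p' [Hp' Ha Hd]] := cd_step Ei1 (n_pos Hi1) (ee_lt Hi1) (isT : 0 != ee i.+1).
    exists p'. split => //. rewrite cd_exit // in Hd. lia.
- left. have Hp0 : p != 0. move: Hc. rewrite negb_and. case/orP => //. lia.
  have [p' [Hp' Ha Hd]] := cd_step Ei Hp (n_pos Hi) Hp0. exists p'. split => //.
  rewrite (cd_sym _ 0 p) (cd_sym _ 0 p'). lia.
- subst j. left. have Hpq : p != q. apply/eqP => E0; subst q. by rewrite cd00 in Hpos.
  have [p' [Hp' Ha Hd]] := cd_step Ei Hp Hq Hpq. exists p'. split => //.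
Qed.

End Chain.

End C2.
Import C2.

Module Gen.
Import C1 C2.

Section Generic.
Variables (T : finType) (adj : rel T) (D : T -> T -> nat).
Hypotheses (Dsym : forall x y, D x y = D y x) (D0 : forall x, D x x = 0)
  (Dpos : forall x y, D x y = 0 -> x = y)
  (Dlip : forall x z y, adj x z -> D x y <= (D z y).+1)
  (Dstep : forall x y, x != y -> exists z, adj x z /\ (D z y).+1 = D x y).

Lemma path_lb u p : path adj u p -> D u (last u p) <= size p.
Proof.
elim: p u => [|z p IH] u /=; first by rewrite D0.
case/andP => Huz Hp. have := IH z Hp. have := Dlip (last z p) Huz. lia.
Qed.

Lemma path_ex u v : exists p, [/\ path adj u p, last u p = v & size p = D u v].
Proof.
have: forall d u, D u v <= d -> exists p, [/\ path adj u p, last u p = v & size p = D u v].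
  elim=> [|d IH] w Hw.
    have Hw0 : D w v = 0 by lia.
    by exists [::]; rewrite /= (Dpos Hw0) D0.
  case: (eqVneq w v) => [->|Hne]; first by exists [::]; rewrite /= D0.
  have [z [Hz Hzv]] := Dstep Hne.
  have [p [Hp Hl Hs]] := IH z ltac:(lia).
  by exists (z :: p); rewrite /= Hz Hp Hl Hs.
by move=> H; apply: (H (D u v)).
Qed.

Lemma sp_iff u v p : shortest_path adj u v p <-> [/\ path adj u p, last u p = v & size p = D u v].
Proof.
split.
  case=> Hp Hl Hmin. have := path_lb Hp. rewrite Hl => H1.
  have [q [Hq Hql Hqs]] := path_ex u v. have := Hmin q Hq Hql. split => //; lia.
case=> Hp Hl Hs; split => // q Hq Hql. have := path_lb Hq. rewrite Hql. lia.
Qed.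

Lemma tri x y z : D x z <= D x y + D y z.
Proof.
have [p1 [H1 L1 S1]] := path_ex x y. have [p2 [H2 L2 S2]] := path_ex y z.
have Hp : path adj x (p1 ++ p2) by rewrite cat_path H1 L1 H2.
have := path_lb Hp. rewrite last_cat L1 L2 size_cat. lia.
Qed.

Lemma Dlip' x z y : adj x z -> D z y <= (D x y).+1.
Proof. move=> H. have := Dlip z H. rewrite D0 => h. have := tri z x y. have := Dsym z x. lia. Qed.

Lemma mem_path_bound v p u : path adj v p -> u \in v :: p -> D v u + D u (last v p) <= size p.
Proof.
elim: p v => [|z p IH] v /=.
  by move=> _; rewrite inE => /eqP ->; rewrite D0.
case/andP => Hvz Hp. rewrite inE => /orP [/eqP ->|Hu].
  rewrite D0 /=. have := path_lb Hp. have := Dlip (last z p) Hvz. lia.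
have := IH z Hp Hu. have := Dlip u Hvz. lia.
Qed.

Lemma on_sp w u v : (exists p, shortest_path adj v w p /\ u \in v :: p) <-> D v u + D u w = D v w.
Proof.
split.
  case=> p [/sp_iff [Hp Hl Hs] Hu]. have := mem_path_bound Hp Hu. rewrite Hl Hs.
  have := tri v u w. lia.
move=> H.
have [p1 [H1 L1 S1]] := path_ex v u. have [p2 [H2 L2 S2]] := path_ex u w.
exists (p1 ++ p2); split.
  apply/sp_iff; split; first by rewrite cat_path H1 L1 H2.
    by rewrite last_cat L1 L2.
  by rewrite size_cat S1 S2.
have : u \in v :: p1 by rewrite -L1 mem_last.
rewrite !inE mem_cat => /orP [->|->] //; by rewrite orbT.
Qed.

Lemma res_iff w u v : strongly_resolves adj w u v <->
  (D v u + D u w = D v w \/ D u v + D v w = D u w).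
Proof.
rewrite /strongly_resolves. split.
  by case=> H; [left; apply/on_sp | right; apply/on_sp].
by case=> H; [left; apply/on_sp | right; apply/on_sp].
Qed.

Definition mmd x y := (forall z, adj x z -> D z y <= D x y) /\ (forall z, adj y z -> D z x <= D y x).

Lemma mmd_res x y w : mmd x y -> strongly_resolves adj w x y -> w = x \/ w = y.
Proof.
case=> Hx Hy /res_iff [] H.
  case: (eqVneq w x) => [->|Hne]; first by left.
  have [z [Hz Hzw]] := Dstep (y := w) (x := x) ltac:(by rewrite eq_sym).
  have := tri y z w. have := Hx z Hz. rewrite (Dsym z y) (Dsym x y). lia.
case: (eqVneq w y) => [->|Hne]; first by right.
have [z [Hz Hzw]] := Dstep (y := w) (x := y) ltac:(by rewrite eq_sym).
have := tri x z w. have := Hy z Hz. rewrite (Dsym z x) (Dsym y x). lia.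
Qed.

Lemma srs_cover (W : {set T}) : strong_resolving_set adj W ->
  forall x y, x != y -> mmd x y -> (x \in W) || (y \in W).
Proof.
move=> HW x y Hxy Hm. have [w Hw Hr] := HW x y Hxy.
by case: (mmd_res Hm Hr) => <-; rewrite Hw ?orbT.
Qed.

Lemma cover_srs (W : {set T}) : (forall x y, x != y -> mmd x y -> (x \in W) || (y \in W)) ->
  strong_resolving_set adj W.
Proof.
move=> HW u v Huv.
have Pu : (D v u + D u u == D v u) by rewrite D0 addn0.
case: (@arg_maxnP T u (fun w => D v u + D u w == D v w) (fun w => D v w) Pu) => x /eqP Px Hxmax.
have Pv : (D x v + D v v == D x v) by rewrite D0 addn0.
case: (@arg_maxnP T v (fun w => D x v + D v w == D x w) (fun w => D x w) Pv) => y /eqP Py Hymax.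
have Duv : D u v <> 0 by move=> /Dpos E; rewrite E eqxx in Huv.
have Hmm : mmd x y.
  split => z Hz; rewrite leqNgt; apply/negP => Hlt.
  - have h1 := Dlip' y Hz. have h2 := tri z v y. have h3 := Dlip' v Hz.
    have h4 := tri v u z. have h5 := Dlip' u Hz.
    have s1 := Dsym u z. have s2 := Dsym u x. have s3 := Dsym v z. have s4 := Dsym v x.
    have s5 := Dsym v y. have s6 := Dsym y z. have s7 := Dsym y x. have s8 := Dsym u v.
    have Hc : D v u + D u z == D v z by apply/eqP; lia.
    have := Hxmax z Hc. lia.
  - have h1 := Dlip' x Hz. have h2 := tri x v z. have h3 := Dlip' v Hz.
    have s1 := Dsym x z. have s2 := Dsym x y. have s3 := Dsym v y. have s4 := Dsym v z.
    have Hc : D x v + D v z == D x z by apply/eqP; lia.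
    have := Hymax z Hc. lia.
have Hxy : x != y.
  apply/eqP => E. rewrite -E D0 in Py. have s1 := Dsym u v. have s2 := Dsym v x. lia.
case/orP: (HW x y Hxy Hmm) => Hin.
  exists x => //. apply/res_iff. by left.
exists y => //. apply/res_iff. right.
have := tri x u y. have := tri u v y.
have s1 := Dsym v x. have s2 := Dsym v u. have s3 := Dsym u x. lia.
Qed.

End Generic.

End Gen.
Import Gen.

Module C3.
Import C1 C2 Gen.

Section Chain3.
Variables (m : nat) (n : nat -> nat).
Hypothesis Hm : 2 <= m.
Hypothesis Hn : forall i, i < m -> odd (n i) /\ 5 <= n i.

Local Notation raw := (raw_vert m n).
Local Notation V := (chain_vert m n).
Local Notation Dn := (Dn n).
Local Notation kk := (kk n).
Local Notation ee := (ee n).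
Local Notation cann := (cann m n).

Lemma nK i (Hi : i < m) : n i <= chainK m n.
Proof. exact: (leq_bigmax (F := fun j : 'I_m => n j) (Ordinal Hi)). Qed.

Definition mkraw i p (Hi : i < m) (Hp : p < n i) : raw :=
  (Ordinal Hi, Ordinal (leq_trans Hp (nK Hi))).

Lemma canonE (a : raw) : canonical_vert a = cann a.1 a.2.
Proof. by rewrite /canonical_vert /cann /raw_valid ltn_ord. Qed.

Lemma raw_eq (a b : raw) : (a.1 = b.1 :> nat) -> (a.2 = b.2 :> nat) -> a = b.
Proof.
case: a b => [a1 a2] [b1 b2] /= E1 E2. by rewrite (val_inj E1) (val_inj E2).
Qed.

Definition Dr (a b : raw) := Dn a.1 a.2 b.1 b.2.
Definition Dc (x y : V) := Dr (val x) (val y).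

Lemma Dc_sym x y : Dc x y = Dc y x.
Proof. exact: Dn_sym. Qed.

Lemma Dc0 x : Dc x x = 0.
Proof. exact: Dn_self. Qed.

Lemma Dc_pos x y : Dc x y = 0 -> x = y.
Proof.
move=> E. have Hx := valP x. have Hy := valP y. rewrite /= canonE in Hx. rewrite /= canonE in Hy.
have [E1 E2] := Dn_zero Hm Hn Hx Hy E. apply: val_inj. exact: raw_eq.
Qed.

Lemma identE (a b : raw) : ident a b =
  [&& (b.1 == a.1.+1 :> nat), (a.2 == ee a.1 :> nat) & (b.2 == 0 :> nat)].
Proof. by rewrite /ident (exitE Hm Hn (ltn_ord _)). Qed.

Lemma Dr_ident (a b y : raw) : raw_valid y -> ident a b -> Dr a y = Dr b y.
Proof.
rewrite identE /raw_valid => Hy /and3P [/eqP E1 /eqP E2 /eqP E3].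
have Hl : (a.1).+1 < m by rewrite -E1 ltn_ord.
rewrite /Dr E1 E2 E3. by apply: (Dn_ident Hm Hn).
Qed.

Lemma Dr_same (a b y : raw) : raw_valid y -> same_vert a b -> Dr a y = Dr b y.
Proof.
move=> Hy /or3P [/eqP ->|H|H] //; first exact: Dr_ident.
by rewrite (Dr_ident Hy H).
Qed.

Lemma Dr_sym a b : Dr a b = Dr b a.
Proof. exact: Dn_sym. Qed.

Lemma Dc_lip x z y : chain_adj x z -> Dc x y <= (Dc z y).+1.
Proof.
case/existsP => a /existsP [b /and3P [Hxa Hzb Hab]].
have Hy : raw_valid (val y). by have := valP y; case/andP.
rewrite /Dc (Dr_same Hy Hxa) (Dr_same Hy Hzb).
case/and4P: Hab => /eqP E Ha Hb Hadj. rewrite /Dr -E.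
apply: (Dn_lip Hm Hn) => //; rewrite ?E //.
Qed.

Lemma canon_of (b : raw) : raw_valid b -> exists z : V, same_vert (val z) b.
Proof.
move=> Hb. case: (boolP ((0 < b.1) && (b.2 == 0 :> nat))) => H.
  case/andP: H => H1 H2.
  have Hi : (b.1).-1 < m by have := ltn_ord b.1; lia.
  have Hp : ee (b.1).-1 < n (b.1).-1 := ee_lt Hm Hn Hi.
  pose a := mkraw Hi Hp.
  have Ca : canonical_vert a. rewrite canonE /cann /=. apply/and3P; split => //. by rewrite /ee andbF.
  exists (exist _ a Ca). rewrite /= /same_vert. apply/or3P; apply: Or32.
  rewrite identE /= H2 eqxx andbT. apply/eqP; lia.
have Cb : canonical_vert b by rewrite /canonical_vert Hb H.
exists (exist _ b Cb). by rewrite /same_vert eqxx.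
Qed.

Lemma cann_ex i p : cann i p -> exists x : V, ((val x).1 = i :> nat) /\ ((val x).2 = p :> nat).
Proof.
move=> C. have /and3P [Hi Hp _] := C.
have Ca : canonical_vert (mkraw Hi Hp) by rewrite canonE.
by exists (exist _ (mkraw Hi Hp) Ca).
Qed.

Lemma Dc_step x y : x != y -> exists z, chain_adj x z /\ (Dc z y).+1 = Dc x y.
Proof.
move=> Hxy.
have Cx : cann (val x).1 (val x).2 by rewrite -canonE; apply: valP.
have Cy : cann (val y).1 (val y).2 by rewrite -canonE; apply: valP.
have Hy : raw_valid (val y). by have := valP y; case/andP.
have Hpos : 0 < Dc x y.
  rewrite lt0n; apply/eqP => E. by rewrite (Dc_pos E) eqxx in Hxy.
have /and3P [Hj Hq _] := Cy.
case: (Dn_step Hm Hn Cx Hj Hq Hpos).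
- case=> p' [Hp' Ha Hd].
  have Hi : (val x).1 < m := ltn_ord _.
  pose b := mkraw Hi Hp'.
  have [z Hz] := canon_of (Hp' : raw_valid b).
  exists z; split.
    apply/existsP; exists (val x); apply/existsP; exists b.
    rewrite Hz /same_vert eqxx /=. apply/and4P; split => //.
    all: first [by apply/eqP; apply: val_inj | by have := valP x; case/andP | idtac].
  have E : Dc z y = Dr b (val y) := Dr_same Hy Hz. by rewrite E /Dr /=.
- case=> Hi1 [Hpe [p' [Hp' Ha Hd]]].
  pose a := mkraw Hi1 (n_pos Hm Hn Hi1).
  pose b := mkraw Hi1 Hp'.
  have [z Hz] := canon_of (Hp' : raw_valid b).
  exists z; split.
    apply/existsP; exists a; apply/existsP; exists b.
    rewrite Hz /same_vert /= identE /= Hpe !eqxx /= orbT /=.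
    apply/and4P; split => //. exact: (n_pos Hm Hn Hi1).
  have E : Dc z y = Dr b (val y) := Dr_same Hy Hz. rewrite E /Dr /=. exact Hd.
Qed.

End Chain3.

End C3.
Import C3.

Module C4.
Import C1 C2 Gen C3.

Section Chain4.
Variables (m : nat) (n : nat -> nat).
Hypothesis Hm : 2 <= m.
Hypothesis Hn : forall i, i < m -> odd (n i) /\ 5 <= n i.

Local Notation raw := (raw_vert m n).
Local Notation V := (chain_vert m n).
Local Notation Dn := (Dn n).
Local Notation kk := (kk n).
Local Notation ee := (ee n).
Local Notation cann := (cann m n).
Local Notation Dc := (@Dc m n).
Local Notation Dr := (@Dr m n).
Local Notation adj := (@chain_adj m n).

Definition ncut i p := ~~ ((p == ee i) && (i.+1 < m)).

Lemma nbr_same (x z y : V) i p : (val x).1 = i :> nat -> (val x).2 = p :> nat -> ncut i p ->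
  adj x z -> exists p', p' < n i /\ Dc z y = Dn i p' (val y).1 (val y).2.
Proof.
move=> E1 E2 Hnc /existsP [a /existsP [b /and3P [Hxa Hzb Hab]]].
have Hy : raw_valid (val y). by have := valP y; case/andP.
have Cx : cann (val x).1 (val x).2 by rewrite -canonE; apply: valP.
have Ea : a = val x.
  case/or3P: Hxa => [/eqP -> //|H|H].
  - move: H; rewrite (identE Hm Hn) => /and3P [/eqP F1 /eqP F2 _].
    have Hl : (val x).1.+1 < m by rewrite -F1 ltn_ord.
    by move: Hnc; rewrite /ncut -E1 -E2 F2 eqxx Hl.
  - move: H; rewrite (identE Hm Hn) => /and3P [/eqP F1 _ /eqP F2].
    move: Cx; rewrite /cann F1 F2 => /and3P [_ _]. by rewrite eqxx andbT.
subst a. case/and4P: Hab => /eqP F Ha Hb Hadj.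
exists b.2; split.
  by move: Hb; rewrite /raw_valid -F E1.
have -> : Dc z y = Dr b (val y) := Dr_same Hm Hn Hy Hzb.
by rewrite /Dr /= -F E1.
Qed.

Lemma mmd_gen (x y : V) i p j q :
  (val x).1 = i :> nat -> (val x).2 = p :> nat -> ncut i p ->
  (val y).1 = j :> nat -> (val y).2 = q :> nat -> ncut j q ->
  (forall p', p' < n i -> Dn i p' j q <= Dn i p j q) ->
  (forall q', q' < n j -> Dn j q' i p <= Dn j q i p) ->
  mmd adj Dc x y.
Proof.
move=> Ex1 Ex2 Hx Ey1 Ey2 Hy H1 H2. split => z Hz.
- have [p' [Hp' ->]] := nbr_same y Ex1 Ex2 Hx Hz.
  rewrite Ey1 Ey2 /Dc /C3.Dr Ex1 Ex2 Ey1 Ey2. exact: H1.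
- have [q' [Hq' ->]] := nbr_same x Ey1 Ey2 Hy Hz.
  rewrite Ex1 Ex2 /Dc /C3.Dr Ex1 Ex2 Ey1 Ey2. exact: H2.
Qed.

Lemma mmd_same (x y : V) i p q :
  (val x).1 = i :> nat -> (val x).2 = p :> nat -> ncut i p ->
  (val y).1 = i :> nat -> (val y).2 = q :> nat -> ncut i q ->
  cdist (n i) p q = kk i -> mmd adj Dc x y.
Proof.
move=> Ex1 Ex2 Hx Ey1 Ey2 Hy Hc.
have Hi : i < m by rewrite -Ex1 ltn_ord.
have [E _] := nE Hm Hn Hi.
apply: (mmd_gen Ex1 Ex2 Hx Ey1 Ey2 Hy) => p' Hp'; rewrite /C2.Dn eqxx.
- rewrite Hc. have Hq : q < n i by rewrite -Ey2 -Ey1; have := valP y; case/andP.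
  exact: (cd_le E Hp' Hq).
- rewrite [cdist _ q p]cd_sym Hc. have Hq : p < n i by rewrite -Ex2 -Ex1; have := valP x; case/andP.
  exact: (cd_le E Hp' Hq).
Qed.

Lemma mmd_cross (x y : V) i p j q :
  (val x).1 = i :> nat -> (val x).2 = p :> nat -> ncut i p ->
  (val y).1 = j :> nat -> (val y).2 = q :> nat -> ncut j q -> i < j ->
  cdist (n i) p (ee i) = kk i -> cdist (n j) 0 q = kk j -> mmd adj Dc x y.
Proof.
move=> Ex1 Ex2 Hx Ey1 Ey2 Hy Hij Hc1 Hc2.
have Hj : j < m by rewrite -Ey1 ltn_ord.
have Hi : i < m by lia.
have [Ei _] := nE Hm Hn Hi. have [Ej _] := nE Hm Hn Hj.
apply: (mmd_gen Ex1 Ex2 Hx Ey1 Ey2 Hy) => p' Hp'; rewrite /C2.Dn.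
- rewrite (ltn_eqF Hij) Hij Hc1 Hc2.
  have := cd_le Ei Hp' (ee_lt Hm Hn Hi). lia.
- case: (ltngtP j i) => H; try lia. rewrite Hc1 Hc2.
  have := cd_le Ej (n_pos Hm Hn Hj) Hp'. lia.
Qed.

Lemma nonmmd (x y : V) i p j q :
  (val x).1 = i :> nat -> (val x).2 = p :> nat ->
  (val y).1 = j :> nat -> (val y).2 = q :> nat ->
  (i < j /\ 2 <= p <= ee i) \/ (i = j /\ 1 <= p < q /\ q - p < kk i) ->
  ~ mmd adj Dc x y.
Proof.
move=> Ex1 Ex2 Ey1 Ey2 Hc [H1 _].
have Hi : i < m by rewrite -Ex1 ltn_ord.
have [E Hk] := nE Hm Hn Hi.
have Hp : p < n i by rewrite -Ex2 -Ex1; have := valP x; case/andP.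
have Hq : q < n j by rewrite -Ey2 -Ey1; have := valP y; case/andP.
have Hp1 : p.-1 < n i by lia.
pose b := mkraw Hi Hp1.
have [z Hz] := canon_of Hm Hn (Hp1 : raw_valid b).
have Hy : raw_valid (val y). by have := valP y; case/andP.
have Hadj : adj x z.
  apply/existsP; exists (val x); apply/existsP; exists b.
  rewrite Hz /same_vert eqxx /=. apply/and4P; split => //.
  - apply/eqP; apply: val_inj => /=. exact: Ex1.
  - by have := valP x; case/andP.
  - rewrite /= Ex1 Ex2. apply/orP; right. rewrite addn1 prednK; last by case: Hc; lia.
    by rewrite modn_small.
have := H1 z Hadj.
have -> : Dc z y = Dr b (val y) := Dr_same Hm Hn Hy Hz.
rewrite /Dc /C3.Dr /= Ex1 Ex2 Ey1 Ey2 /C2.Dn.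
case: Hc => [[Hij Hpe]|[Hij [Hpq Hqk]]].
- rewrite (ltn_eqF Hij) Hij /cdist /absd /ee. rewrite /ee in Hpe. lia.
- rewrite -Hij eqxx /cdist /absd. lia.
Qed.

End Chain4.

End C4.
Import C4.

Module C5.
Import C1 C2 Gen C3 C4.

Lemma leq_sumn a b (F G : nat -> nat) : (forall i, a <= i < b -> F i <= G i) ->
  \sum_(a <= i < b) F i <= \sum_(a <= i < b) G i.
Proof. move=> H. rewrite big_nat_cond [X in _ <= X]big_nat_cond. apply: leq_sum => i /andP [Hi _]. exact: H. Qed.

Lemma sum_const1 a b (F : nat -> nat) : (forall i, a <= i < b -> 1 <= F i) ->
  b - a <= \sum_(a <= i < b) F i.
Proof.
move=> H. have := leq_sumn H. rewrite (_ : \sum_(a <= i < b) 1 = b - a) //.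
by rewrite big_const_nat iter_addn_0 mul1n.
Qed.

Lemma sum_ind N a b : \sum_(0 <= p < N) ((a <= p) && (p < b) : nat) = minn b N - minn a N.
Proof.
elim: N => [|N IH]; first by rewrite big_geq //; lia.
rewrite big_nat_recr //= IH. case: (leqP a N) => H1; case: (ltnP N b) => H2 /=; lia.
Qed.

Lemma sum_shift (F : nat -> nat) a b s : \sum_(a + s <= p < b + s) F p = \sum_(a <= j < b) F (j + s).
Proof. by rewrite big_addn addnK. Qed.

Lemma sum_split (F : nat -> nat) a b c : a <= b -> b <= c ->
  \sum_(a <= p < c) F p = \sum_(a <= p < b) F p + \sum_(b <= p < c) F p.
Proof. move=> H1 H2. exact: big_cat_nat. Qed.

Lemma sum1 (F : nat -> nat) a : \sum_(a <= p < a.+1) F p = F a.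
Proof. exact: big_nat1. Qed.

Lemma pairs_lb (f : nat -> nat) lo hi s :
  (forall j, lo <= j < hi -> 1 <= f j + f (j + s)) ->
  hi - lo <= \sum_(lo <= j < hi) f j + \sum_(lo <= j < hi) f (j + s).
Proof. move=> H. rewrite -big_split /=. exact: sum_const1. Qed.

Section Dec.
Variables (k : nat) (f : nat -> nat).
Hypothesis Hk : 2 <= k.

Ltac spl a b := rewrite (@sum_split _ a b); [|lia|lia].

Lemma dec1 : \sum_(0 <= p < 2 * k + 1) f p =
  f 0 + \sum_(1 <= j < k) f j + f k + f k.+1 + \sum_(1 <= j < k) f (j + k.+1).
Proof.
spl 0 1. rewrite sum1. spl 1 k. spl k k.+1. rewrite sum1.
spl k.+1 k.+2. rewrite sum1.
have -> : 2 * k + 1 = k + k.+1 by lia.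
have -> : k.+2 = 1 + k.+1 by lia.
rewrite sum_shift. lia.
Qed.

Lemma dec2 : \sum_(0 <= p < 2 * k + 1) f p =
  f 0 + f 1 + \sum_(2 <= j < k.+1) f j + f k.+1 + \sum_(2 <= j < k.+1) f (j + k).
Proof.
spl 0 1. rewrite sum1. spl 1 2. rewrite sum1. spl 2 k.+1. spl k.+1 k.+2. rewrite sum1.
have -> : 2 * k + 1 = k.+1 + k by lia.
have -> : k.+2 = 2 + k by lia.
rewrite sum_shift. lia.
Qed.

Lemma dec3 : \sum_(0 <= p < 2 * k + 1) f p =
  f 0 + \sum_(1 <= j < k.+1) f j + \sum_(1 <= j < k.+1) f (j + k).
Proof.
spl 0 1. rewrite sum1. spl 1 k.+1.
have -> : 2 * k + 1 = k.+1 + k by lia.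
have E : \sum_(k.+1 <= p < k.+1 + k) f p = \sum_(1 + k <= p < k.+1 + k) f p by rewrite add1n.
rewrite E sum_shift. lia.
Qed.

End Dec.

Lemma half_graph m (x y : nat -> bool) (g : nat -> nat) : 1 <= m ->
  (forall i j, i < j < m -> x i || y j) ->
  (forall i, i < m.-1 -> x i <= g i) ->
  (forall i, 0 < i < m -> y i <= g i) ->
  m.-1 <= \sum_(0 <= i < m) g i.
Proof.
move=> Hm Hxy Hx Hy.
have [f [Hf Hfi]] : exists f, f < m /\ forall i, i < m -> i != f -> 1 <= g i.
  case: (boolP [exists i : 'I_m.-1, ~~ x i]) => [Hex|Hall].
    have Hex' : exists i, (i < m.-1) && ~~ x i.
      case/existsP: Hex => i Hi. exists i. by rewrite ltn_ord.
    case: (ex_minnP Hex') => f /andP [Hf Hnx] Hmin.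
    exists f; split; first lia.
    move=> i Hi Hne. case: (ltngtP i f) => H.
    - have Hxi : x i. apply/negPn/negP => Hn.
        have := Hmin i. rewrite Hn andbT. move/(_ ltac:(lia)). lia.
      have := Hx i ltac:(lia). by rewrite Hxi.
    - have := Hxy f i ltac:(lia). rewrite (negbTE Hnx) /= => Hyi.
      have := Hy i ltac:(lia). by rewrite Hyi.
    - by rewrite H eqxx in Hne.
  exists m.-1; split; first lia.
  move=> i Hi Hne.
  have Hi' : i < m.-1 by lia.
  have Hxi : x i. move/existsPn: Hall => /(_ (Ordinal Hi')). by rewrite negbK.
  have := Hx i ltac:(lia). by rewrite Hxi.
rewrite (@sum_split _ 0 f) //; last lia.
rewrite (@sum_split _ f f.+1) //. rewrite sum1.
have h1 := @sum_const1 0 f g ltac:(move=> i Hi; apply: Hfi; lia).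
have h2 := @sum_const1 f.+1 m g ltac:(move=> i Hi; apply: Hfi; lia).
lia.
Qed.

End C5.
Import C5.

Module C6.
Import C1 C2 Gen C3 C4 C5.

Section Chain6.
Variables (m : nat) (n : nat -> nat).
Hypothesis Hm : 2 <= m.
Hypothesis Hn : forall i, i < m -> odd (n i) /\ 5 <= n i.

Local Notation raw := (raw_vert m n).
Local Notation V := (chain_vert m n).
Local Notation Dn := (Dn n).
Local Notation kk := (kk n).
Local Notation ee := (ee n).
Local Notation cann := (cann m n).
Local Notation ncut := (ncut m n).
Local Notation Dc := (@Dc m n).
Local Notation adj := (@chain_adj m n).

Definition memW (W : {set V}) (i p : nat) : bool :=
  [exists x in W, ((val x).1 == i :> nat) && ((val x).2 == p :> nat)].

Lemma memW_x (W : {set V}) (x : V) i p : (val x).1 = i :> nat -> (val x).2 = p :> nat -> memW W i p = (x \in W).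
Proof.
move=> E1 E2. apply/existsP/idP.
  case=> x' /andP [Hx' /andP [/eqP F1 /eqP F2]].
  have -> : x = x'. apply: val_inj. apply: raw_eq; by rewrite ?E1 ?E2 ?F1 ?F2.
  done.
move=> Hx. exists x. by rewrite Hx E1 E2 !eqxx.
Qed.

Lemma memW_range (W : {set V}) i p : memW W i p -> p < n i.
Proof.
case/existsP => x /andP [_ /andP [/eqP F1 /eqP F2]].
have := valP x. case/andP. by rewrite /raw_valid F1 F2.
Qed.

Lemma cardW (W : {set V}) : #|W| = \sum_(0 <= i < m) \sum_(0 <= p < n i) memW W i p.
Proof.
rewrite -(card_imset W val_inj) -sum1_card big_mkcond /=.
have -> : \sum_(a : raw) (if a \in [set val x | x in W] then 1 else 0) =
          \sum_(i : 'I_m) \sum_(p : 'I_(chainK m n)) (memW W i p : nat).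
  rewrite pair_big /=. apply: eq_big => [[i p]|[i p] _] //=.
  case: (boolP ((i, p) \in [set val x | x in W])) => H; case: (boolP (memW W i p)) => H' //.
  - move/negP: H'; case. case/imsetP: H => x Hx E. apply/existsP; exists x. by rewrite Hx -E !eqxx.
  - move/negP: H; case. case/existsP: H' => x /andP [Hx /andP [/eqP F1 /eqP F2]].
    apply/imsetP; exists x => //. apply: raw_eq; by rewrite ?F1 ?F2.
rewrite -(big_mkord xpredT (fun i => \sum_(p < chainK m n) (memW W i p : nat))).
apply: eq_big_nat => i /andP [_ Hi].
rewrite -(big_mkord xpredT (fun p => (memW W i p : nat))).
rewrite (@sum_split _ 0 (n i)) //; last exact: nK.
have E0 : \sum_(n i <= p < chainK m n) (memW W i p : nat) = 0.
  rewrite big_nat_cond big1 // => p /andP [/andP [H1 _] _].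
  case: (boolP (memW W i p)) => // /memW_range. lia.
by rewrite E0 addn0.
Qed.

Lemma srsC (W : {set V}) : strong_resolving_set adj W ->
  forall x y, x != y -> mmd adj Dc x y -> (x \in W) || (y \in W).
Proof.
move=> HW. apply: (srs_cover (D := Dc)) => //.
- exact: Dc_sym.
- exact: Dc0.
- exact: Dc_pos Hm Hn.
- exact: Dc_lip Hm Hn.
- exact: Dc_step Hm Hn.
Qed.

Lemma cann_of i p : i < m -> p < n i -> (0 < i -> 0 < p) -> cann i p.
Proof. move=> H1 H2 H3. rewrite /C2.cann H1 H2 /=. apply/negP => /andP [H4 /eqP H5]. have := H3 H4. lia. Qed.

Lemma ncut_of i p : (p != ee i) || ~~ (i.+1 < m) -> ncut i p.
Proof. rewrite /C4.ncut negb_and. by []. Qed.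

Lemma cover_pair (W : {set V}) (HW : strong_resolving_set adj W) i p q :
  cann i p -> cann i q -> ncut i p -> ncut i q -> cdist (n i) p q = kk i ->
  memW W i p || memW W i q.
Proof.
move=> Cp Cq Np Nq Hc.
have [x [Ex1 Ex2]] := cann_ex Cp. have [y [Ey1 Ey2]] := cann_ex Cq.
have Hi : i < m by case/and3P: Cp.
have [_ Hk] := nE Hm Hn Hi.
have Hxy : x != y. apply/eqP => E. subst y. rewrite Ex2 in Ey2. subst q.
  rewrite cd00 in Hc. lia.
have := srsC HW Hxy (mmd_same Hm Hn Ex1 Ex2 Np Ey1 Ey2 Nq Hc).
by rewrite (memW_x W Ex1 Ex2) (memW_x W Ey1 Ey2).
Qed.

Lemma cover_cross (W : {set V}) (HW : strong_resolving_set adj W) i p j q :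
  i < j -> cann i p -> cann j q -> ncut i p -> ncut j q ->
  cdist (n i) p (ee i) = kk i -> cdist (n j) 0 q = kk j ->
  memW W i p || memW W j q.
Proof.
move=> Hij Cp Cq Np Nq Hc1 Hc2.
have [x [Ex1 Ex2]] := cann_ex Cp. have [y [Ey1 Ey2]] := cann_ex Cq.
have Hxy : x != y. apply/eqP => E. subst y. rewrite Ex1 in Ey1. lia.
have := srsC HW Hxy (mmd_cross Hm Hn Ex1 Ex2 Np Ey1 Ey2 Nq Hij Hc1 Hc2).
by rewrite (memW_x W Ex1 Ex2) (memW_x W Ey1 Ey2).
Qed.

End Chain6.

End C6.
Import C6.

Module C7.
Import C1 C2 Gen C3 C4 C5 C6.

Section Chain7.
Variables (m : nat) (n : nat -> nat).
Hypothesis Hm : 2 <= m.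
Hypothesis Hn : forall i, i < m -> odd (n i) /\ 5 <= n i.

Local Notation V := (chain_vert m n).
Local Notation kk := (kk n).
Local Notation ee := (ee n).
Local Notation cann := (cann m n).
Local Notation ncut := (ncut m n).
Local Notation adj := (@chain_adj m n).
Local Notation memW := (@memW m n).

Variable W : {set V}.
Hypothesis HW : strong_resolving_set adj W.

Lemma ncut_ne i p : p != (kk i).+1 -> ncut i p.
Proof. move=> H. apply: ncut_of. by rewrite /C2.ee H. Qed.

Lemma ncut_last p : ncut m.-1 p.
Proof. apply: ncut_of. apply/orP; right. lia. Qed.

Lemma pairsW i lo hi s :
  (forall j, lo <= j < hi -> [/\ cann i j, cann i (j + s), ncut i j, ncut i (j + s) &
                                  cdist (n i) j (j + s) = kk i]) ->
  hi - lo <= \sum_(lo <= j < hi) memW W i j + \sum_(lo <= j < hi) memW W i (j + s).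
Proof.
move=> H. apply: pairs_lb => j Hj. have [C1 C2 N1 N2 Hc] := H j Hj.
have := cover_pair Hm Hn HW C1 C2 N1 N2 Hc.
by case: (memW W i j); case: (memW W i (j + s)).
Qed.

Lemma T_first : kk 0 + (memW W 0 0 && memW W 0 1) <= \sum_(0 <= p < n 0) memW W 0 p.
Proof.
have H0 : 0 < m by lia. have [E Hk] := nE Hm Hn H0.
rewrite E.
case: (boolP (memW W 0 0 && memW W 0 1)) => H.
- rewrite (@dec2 _ (fun p => (memW W 0 p : nat)) Hk).
  have := @pairsW 0 2 (kk 0).+1 (kk 0) ltac:(move=> j Hj; split;
    [apply: cann_of|apply: cann_of|apply: ncut_ne|apply: ncut_ne|rewrite /cdist /absd E]; lia).
  case/andP: H => -> ->. lia.
- rewrite (@dec1 _ (fun p => (memW W 0 p : nat)) Hk).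
  have := @pairsW 0 1 (kk 0) (kk 0).+1 ltac:(move=> j Hj; split;
    [apply: cann_of|apply: cann_of|apply: ncut_ne|apply: ncut_ne|rewrite /cdist /absd E]; lia).
  have := @cover_pair m n Hm Hn W HW 0 0 (kk 0) ltac:(apply: cann_of; lia) ltac:(apply: cann_of; lia)
    ltac:(apply: ncut_ne; lia) ltac:(apply: ncut_ne; lia) ltac:(rewrite /cdist /absd E; lia).
  case: (memW W 0 0); case: (memW W 0 (kk 0)) => /=; lia.
Qed.

Lemma T_mid i : 0 < i < m.-1 ->
  kk i - 1 + (memW W i 1 || memW W i (kk i)) <= \sum_(0 <= p < n i) memW W i p.
Proof.
move=> Hi. have Hi' : i < m by lia. have [E Hk] := nE Hm Hn Hi'.
rewrite E.
case: (boolP (memW W i 1)) => H1 /=.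
- rewrite (@dec2 _ (fun p => (memW W i p : nat)) Hk).
  have := @pairsW i 2 (kk i).+1 (kk i) ltac:(move=> j Hj; split;
    [apply: cann_of|apply: cann_of|apply: ncut_ne|apply: ncut_ne|rewrite /cdist /absd E]; lia).
  rewrite H1. lia.
- rewrite (@dec1 _ (fun p => (memW W i p : nat)) Hk).
  have := @pairsW i 1 (kk i) (kk i).+1 ltac:(move=> j Hj; split;
    [apply: cann_of|apply: cann_of|apply: ncut_ne|apply: ncut_ne|rewrite /cdist /absd E]; lia).
  case: (memW W i (kk i)) => /=; lia.
Qed.

Lemma T_last : kk m.-1 + (memW W m.-1 (kk m.-1) && memW W m.-1 (ee m.-1))
   <= \sum_(0 <= p < n m.-1) memW W m.-1 p.
Proof.
have Hi : m.-1 < m by lia. have [E Hk] := nE Hm Hn Hi.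
rewrite E.
case: (boolP (memW W m.-1 (kk m.-1) && memW W m.-1 (ee m.-1))) => H.
- rewrite (@dec1 _ (fun p => (memW W m.-1 p : nat)) Hk).
  have := @pairsW m.-1 1 (kk m.-1) (kk m.-1).+1 ltac:(move=> j Hj; split;
    [apply: cann_of|apply: cann_of|apply: ncut_last|apply: ncut_last|rewrite /cdist /absd E]; lia).
  case/andP: H. rewrite /C2.ee => -> ->. lia.
- rewrite (@dec3 _ (fun p => (memW W m.-1 p : nat)) Hk).
  have := @pairsW m.-1 1 (kk m.-1).+1 (kk m.-1) ltac:(move=> j Hj; split;
    [apply: cann_of|apply: cann_of|apply: ncut_last|apply: ncut_last|rewrite /cdist /absd E]; lia).
  lia.
Qed.

End Chain7.

End C7.
Import C7.

Module C8.
Import C1 C2 Gen C3 C4 C5 C6 C7.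

Lemma orAA a1 a2 b1 b2 : a1 || b1 -> a1 || b2 -> a2 || b1 -> a2 || b2 -> (a1 && a2) || (b1 && b2).
Proof. by case: a1; case: a2; case: b1; case: b2. Qed.
Lemma orA1 a1 a2 b : a1 || b -> a2 || b -> (a1 && a2) || b.
Proof. by case: a1; case: a2; case: b. Qed.
Lemma or1A a b1 b2 : a || b1 -> a || b2 -> a || (b1 && b2).
Proof. by case: a; case: b1; case: b2. Qed.

Section Chain8.
Variables (m : nat) (n : nat -> nat).
Hypothesis Hm : 2 <= m.
Hypothesis Hn : forall i, i < m -> odd (n i) /\ 5 <= n i.

Local Notation V := (chain_vert m n).
Local Notation kk := (kk n).
Local Notation ee := (ee n).
Local Notation cann := (cann m n).
Local Notation ncut := (ncut m n).
Local Notation adj := (@chain_adj m n).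
Local Notation memW := (@memW m n).
Local Notation Dc := (@Dc m n).

Definition Lc (W : {set V}) i := if i == 0 then memW W 0 0 && memW W 0 1 else memW W i 1.
Definition Rc (W : {set V}) j := if j == m.-1 then memW W j (kk j) && memW W j (ee j) else memW W j (kk j).

Lemma cross (W : {set V}) (HW : strong_resolving_set adj W) i j : i < j < m -> Lc W i || Rc W j.
Proof.
move=> Hij. have Hi : i < m by lia. have Hj : j < m by lia.
have [Ei Hki] := nE Hm Hn Hi. have [Ej Hkj] := nE Hm Hn Hj.
have K : forall p q, cann i p -> ncut i p -> cdist (n i) p (ee i) = kk i ->
    cann j q -> ncut j q -> cdist (n j) 0 q = kk j -> memW W i p || memW W j q.
  move=> p q C1 N1 D1 C2 N2 D2. apply: (cover_cross Hm Hn HW) => //. lia.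
have KL : forall p, (i == 0) && (p <= 1) || (p == 1) ->
    [/\ cann i p, ncut i p & cdist (n i) p (ee i) = kk i].
  move=> p Hp. split; [apply: cann_of|apply: ncut_ne|rewrite /cdist /absd /C2.ee Ei]; lia.
have KR1 : [/\ cann j (kk j), ncut j (kk j) & cdist (n j) 0 (kk j) = kk j].
  split; [apply: cann_of|apply: ncut_ne|rewrite /cdist /absd Ej]; lia.
have KR2 : j = m.-1 -> [/\ cann j (ee j), ncut j (ee j) & cdist (n j) 0 (ee j) = kk j].
  move=> Ejm. split; [apply: cann_of|rewrite Ejm; apply: ncut_last|rewrite /cdist /absd /C2.ee Ej];
  rewrite /C2.ee; lia.
have [C1 N1 D1] := KR1.
rewrite /Lc /Rc. case: (eqVneq i 0) => Hi0; case: (eqVneq j m.-1) => Hjm.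
- have [C2 N2 D2] := KR2 Hjm. subst i.
  have [A1 B1 E1] := KL 0 isT. have [A2 B2 E2] := KL 1 isT.
  apply: orAA; apply: K => //.
- subst i.
  have [A1 B1 E1] := KL 0 isT. have [A2 B2 E2] := KL 1 isT.
  apply: orA1; apply: K => //.
- have [C2 N2 D2] := KR2 Hjm.
  have [A1 B1 E1] := KL 1 ltac:(by rewrite eqxx orbT).
  apply: or1A; apply: K => //.
- have [A1 B1 E1] := KL 1 ltac:(by rewrite eqxx orbT).
  apply: K => //.
Qed.

Definition base i := if i == 0 then kk 0 else if i == m.-1 then kk i else kk i - 1.
Definition gW (W : {set V}) i : nat :=
  if i == 0 then Lc W 0 else if i == m.-1 then Rc W i else Lc W i || Rc W i.

Lemma base_sum : \sum_(0 <= i < m) base i = (n 0)./2 + (n m.-1)./2 + \sum_(1 <= i < m.-1) (n i - 2)./2.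
Proof.
rewrite (@sum_split _ 0 1 m) //; last lia. rewrite sum1.
rewrite (@sum_split _ 1 m.-1 m); [|lia|lia].
have Em : m = m.-1.+1 by lia.
have -> : \sum_(m.-1 <= i < m) base i = base m.-1 by rewrite {2}Em sum1.
rewrite /base eqxx /=. have -> : (m.-1 == 0) = false by apply/negbTE; lia.
have -> : \sum_(1 <= i < m.-1) base i = \sum_(1 <= i < m.-1) (n i - 2)./2.
  apply: eq_big_nat => i Hi. rewrite /base.
  have -> : (i == 0) = false by apply/negbTE; lia.
  have -> : (i == m.-1) = false by apply/negbTE; lia.
  have Him : i < m by case/andP: Hi => _ H; lia.
  have [E Hk] := nE Hm Hn Him.
  rewrite E. have -> : 2 * kk i + 1 - 2 = true + (kk i - 1).*2 by rewrite /=; lia.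
  by rewrite half_bit_double.
rewrite /C2.kk eqxx. lia.
Qed.

Lemma lower (W : {set V}) (HW : strong_resolving_set adj W) :
  m - 1 + (n 0)./2 + (n m.-1)./2 + \sum_(1 <= i < m.-1) (n i - 2)./2 <= #|W|.
Proof.
rewrite cardW.
have Hb : forall i, 0 <= i < m -> base i + gW W i <= \sum_(0 <= p < n i) memW W i p.
  move=> i /andP [_ Hi]. rewrite /base /gW.
  case: (eqVneq i 0) => Hi0.
    subst i. rewrite /Lc eqxx. exact: (T_first Hm Hn HW).
  case: (eqVneq i m.-1) => Him.
    subst i. rewrite /Rc eqxx. exact: (T_last Hm Hn HW).
  have := T_mid Hm Hn HW (i := i) ltac:(lia). rewrite /Lc /Rc (negbTE Hi0) (negbTE Him). done.
have := leq_sumn Hb. rewrite big_split /=.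
have Hg : m.-1 <= \sum_(0 <= i < m) gW W i.
  apply: (half_graph (x := Lc W) (y := Rc W)); first lia.
  - move=> i j Hij. exact: (cross HW).
  - move=> i Hi. rewrite /gW. case: (eqVneq i 0) => [->|H0] //.
    have -> : (i == m.-1) = false by apply/negbTE; lia. by case: (Lc W i).
  - move=> i Hi. rewrite /gW. have -> : (i == 0) = false by apply/negbTE; lia.
    case: (eqVneq i m.-1) => [->|H1] //. by case: (Lc W i); case: (Rc W i).
have := base_sum. lia.
exact Hm.
Qed.

End Chain8.

End C8.
Import C8.

Module C9.
Import C1 C2 Gen C3 C4 C5 C6 C7 C8.

Section Chain9.
Variables (m : nat) (n : nat -> nat).
Hypothesis Hm : 2 <= m.
Hypothesis Hn : forall i, i < m -> odd (n i) /\ 5 <= n i.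

Local Notation V := (chain_vert m n).
Local Notation kk := (kk n).
Local Notation ee := (ee n).
Local Notation cann := (cann m n).
Local Notation adj := (@chain_adj m n).
Local Notation memW := (@memW m n).
Local Notation Dc := (@Dc m n).

Definition inW i p := if i == 0 then (p <= 1) || (ee i < p)
  else if i == m.-1 then ee i <= p else (p == 1) || (ee i < p).

Definition W0 : {set V} := [set x : V | inW (val x).1 (val x).2].

Lemma memW0 i p : memW W0 i p = cann i p && inW i p.
Proof.
case: (boolP (cann i p)) => C /=.
  have [x [E1 E2]] := cann_ex C. by rewrite (memW_x W0 E1 E2) inE E1 E2.
apply: negbTE; apply/negP => /existsP [x /andP [_ /andP [/eqP F1 /eqP F2]]].
move/negP: C; apply. rewrite -F1 -F2 -canonE. exact: valP.
Qed.

Lemma sum_ext (F G : nat -> nat) a b : (forall p, a <= p < b -> F p = G p) ->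
  \sum_(a <= p < b) F p = \sum_(a <= p < b) G p.
Proof. exact: eq_big_nat. Qed.

Lemma T0 i : i < m -> \sum_(0 <= p < n i) (cann i p && inW i p : nat) = base m n i + (i < m.-1).
Proof.
move=> Hi. have [E Hk] := nE Hm Hn Hi. rewrite /base.
case: (eqVneq i 0) => Hi0.
  subst i. rewrite (@sum_ext _ (fun p => ((0 <= p) && (p < 2) : nat) + (((kk 0).+2 <= p) && (p < n 0) : nat))); last first.
    move=> p Hp. rewrite /C2.cann /inW /C2.ee eqxx /=. lia.
  rewrite big_split !sum_ind /=. lia.
case: (eqVneq i m.-1) => Him.
  rewrite (@sum_ext _ (fun p => (((kk i).+1 <= p) && (p < n i) : nat))); last first.
    move=> p Hp. rewrite /C2.cann /inW /C2.ee (negbTE Hi0) Him eqxx /=. lia.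
  rewrite sum_ind. rewrite Him in E *. lia.
rewrite (@sum_ext _ (fun p => ((1 <= p) && (p < 2) : nat) + (((kk i).+2 <= p) && (p < n i) : nat))); last first.
  move=> p Hp. rewrite /C2.cann /inW /C2.ee (negbTE Hi0) (negbTE Him) /=. lia.
rewrite big_split !sum_ind /=. lia.
Qed.

Lemma card_W0 : #|W0| = m - 1 + (n 0)./2 + (n m.-1)./2 + \sum_(1 <= i < m.-1) (n i - 2)./2.
Proof.
rewrite cardW.
have -> : \sum_(0 <= i < m) \sum_(0 <= p < n i) memW W0 i p =
          \sum_(0 <= i < m) (base m n i + ((0 <= i) && (i < m.-1) : nat)).
  apply: eq_big_nat => i /andP [_ Hi]. rewrite -T0 //. apply: eq_big_nat => p _. by rewrite memW0.
rewrite big_split sum_ind /= (base_sum Hm Hn). lia. all: exact Hm.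
Qed.

Lemma notinW i p : cann i p -> ~~ inW i p ->
  (i < m.-1 /\ 2 <= p <= ee i) \/ (i = m.-1 /\ 1 <= p <= kk i).
Proof.
rewrite /C2.cann /inW /C2.ee => /and3P [Hi Hp Hc].
case: (eqVneq i 0) => Hi0.
  subst i. move=> H. left. lia.
case: (eqVneq i m.-1) => Him H.
  right. lia.
left. lia.
Qed.

Lemma mmd_swap (x y : V) : mmd adj Dc x y -> mmd adj Dc y x.
Proof. by case. Qed.

Lemma W0_srs : strong_resolving_set adj W0.
Proof.
apply: (cover_srs (D := Dc)).
- exact: Dc_sym.
- exact: Dc0.
- exact: Dc_pos Hm Hn.
- exact: Dc_lip Hm Hn.
- exact: Dc_step Hm Hn.
move=> x y Hxy Hmm. apply/negPn/negP. rewrite negb_or => /andP [Hx Hy].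
rewrite !inE in Hx Hy.
move: x y Hxy Hmm Hx Hy => [[i p] Cx] [[j q] Cy] Hxy Hmm /= Hx Hy.
have Cx' : cann i p by rewrite -(canonE (i, p)).
have Cy' : cann j q by rewrite -(canonE (j, q)).
have NX := notinW Cx' Hx. have NY := notinW Cy' Hy.
have Hix : (i : nat) < m := ltn_ord _.
have Hiy : (j : nat) < m := ltn_ord _.
case: (ltngtP i j) => H.
- apply: (nonmmd Hm Hn (erefl _) (erefl _) (erefl _) (erefl _) _ Hmm) => /=. left. lia.
- apply: (nonmmd Hm Hn (erefl _) (erefl _) (erefl _) (erefl _) _ (mmd_swap Hmm)) => /=. left. lia.
- have Eij : i = j by apply: val_inj. subst j.
  case: (ltngtP p q) => H2.
  + apply: (nonmmd Hm Hn (erefl _) (erefl _) (erefl _) (erefl _) _ Hmm) => /=. right.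
    rewrite /C2.ee in NX NY. lia.
  + apply: (nonmmd Hm Hn (erefl _) (erefl _) (erefl _) (erefl _) _ (mmd_swap Hmm)) => /=. right.
    rewrite /C2.ee in NX NY. lia.
  + move/eqP: Hxy; apply. apply: val_inj => /=. apply: raw_eq => //=.
Qed.

Theorem main_sec : is_sdim adj (m - 1 + (n 0)./2 + (n m.-1)./2 + \sum_(1 <= i < m.-1) (n i - 2)./2).
Proof.
split.
  exists W0. split; [exact: W0_srs | exact: card_W0].
move=> W HW. exact: (lower Hm Hn HW).
Qed.

End Chain9.


End C9.
Import C9.

Theorem theorem3p8 (m : nat) (n : nat -> nat) :
  2 <= m ->
  (forall i, i < m -> odd (n i) /\ 5 <= n i) ->
  is_sdim (@chain_adj m n)
    (m - 1 + (n 0)./2 + (n m.-1)./2 + \sum_(1 <= i < m.-1) (n i - 2)./2).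
Proof. move=> Hm Hn. exact: main_sec. Qed.
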